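(* Let $\mathcal{A}$ be an $[n_a,k_a]_q$ cyclic code with minimum Hamming distance $d_a$ and let $\mathcal{B}$ be an $[n_b,k_b]_q$ cyclic code with minimum Hamming distance $d_b$, where $\gcd(n_a,n_b)=1$. Let $\alpha$ be an element of order $n_a$ in $\mathbb{F}_{q^{s_a}}$ and $\beta$ an element of order $n_b$ in $\mathbb{F}_{q^{s_b}}$. Let $f_1,f_2,m_1,m_2,\delta,\nu$ be integers with $m_1\neq 0$, $m_2\neq 0$, $\gcd(n_a,m_1)=\gcd(n_b,m_2)=1$, $\delta\geq 2$ and $\nu>0$, such that $$\sum_{i=0}^{\infty} a(\alpha^{f_1+im_1+j})\cdot b(\beta^{f_2+im_2+j})\,X^i \equiv 0 \bmod X^{\delta-1}\quad \text{for all } j=0,1,\dots,\nu$$ holds for all codewords $a(X)\in\mathcal{A}$ and $b(X)\in\mathcal{B}$ (the power series being over $\mathbb{F}_{q^s}$ with $s=\mathrm{lcm}(s_a,s_b)$). Then $$d_a \geq \left\lceil \frac{\delta+\nu}{d_b}\right\rceil.$$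
   Context: A cyclic $[n,k]_q$ code is an ideal of $\mathbb{F}_q[X]/(X^n-1)$; codewords are identified with polynomials $c(X)=\sum_{i=0}^{n-1}c_iX^i$ of degree less than $n$, and $c(\gamma)$ denotes evaluation of this polynomial at $\gamma$ in an extension field of $\mathbb{F}_q$. *)

(* Defs.v *)
From HB Require Import structures.
From mathcomp Require Import all_boot all_order all_algebra all_field.
Set Implicit Arguments. Unset Strict Implicit. Unset Printing Implicit Defensive.
Import GRing.Theory.
Local Open Scope ring_scope.

(* A cyclic [n,k]_q code = an ideal of F[X]/(X^n - 1), i.e. an
   F-linear set of such polynomials closed under multiplication by X
   modulo X^n - 1. *)
Definition cyclic_code (F : fieldType) (n : nat) (C : pred {poly F}) : Prop :=
  [/\ C 0,
      (forall (c : F) (p q : {poly F}), C p -> C q -> C (c *: p + q)),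
      (forall p, C p -> (size p <= n)%N) &
      (forall p, C p -> C (('X * p) %% ('X^n - 1)))].

Definition hweight (F : fieldType) (p : {poly F}) : nat :=
  count (fun c => c != 0) p.

Definition hdist (F : fieldType) (p q : {poly F}) : nat := hweight (p - q).

(* d is the minimum Hamming distance of the code C (which thus has at least
   two distinct codewords). *)
Definition min_distance (F : fieldType) (C : pred {poly F}) (d : nat) : Prop :=
  (exists p q, [/\ C p, C q, p != q & hdist p q = d]) /\
  (forall p q, C p -> C q -> p != q -> (d <= hdist p q)%N).

Definition peval (F : fieldType) (L : fieldExtType F) (p : {poly F}) (g : L) : L :=
  (map_poly (in_alg L) p).[g].

Definition ceil_div (m d : nat) : nat := ((m + d.-1) %/ d)%N.

(* Main.v *)
Require Import Defs.
From HB Require Import structures.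
From mathcomp Require Import all_boot all_order all_algebra all_field.
From mathcomp Require Import zify ring.
Import GRing.Theory.
Local Open Scope ring_scope.
Lemma lin_eval (L : fieldType) (I : Type) (r : seq I) (c y : I -> L) (g : {poly L}) :
  (forall j, (j < size g)%N -> \sum_(t <- r) c t * y t ^+ j = 0) ->
  \sum_(t <- r) c t * g.[y t] = 0.
Proof.
move=> H.
under eq_bigr => t _ do rewrite horner_coef mulr_sumr.
rewrite exchange_big /= big1 // => j _.
under eq_bigr => t _ do rewrite mulrCA.
by rewrite -mulr_sumr H ?mulr0.
Qed.

Lemma core (L : fieldType) (I : eqType) (r : seq I) (c y z : I -> L) (d nu : nat) :
  uniq r -> {in r &, injective y} -> {in r &, injective z} ->
  (forall t, t \in r -> c t != 0) -> (0 < d)%N -> r != [::] ->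
  (forall i j, (i < d)%N -> (j <= nu)%N ->
     \sum_(t <- r) c t * z t ^+ i * y t ^+ j = 0) ->
  (d + nu < size r)%N.
Proof.
move=> ur iy iz cn d0 rn H.
rewrite ltnNge; apply/negP => hs.
set k := (size r - d)%N.
have er := cat_take_drop k r.
set s1 := take k r in er; set s2 := drop k r in er.
set g := \prod_(u <- s1) ('X - (y u)%:P).
have gv : forall t, g.[y t] = \prod_(u <- s1) (y t - y u).
  by move=> t; rewrite /g horner_prod; apply: eq_bigr => u _; rewrite hornerXsubC.
have H2 : forall i, (i < d)%N -> \sum_(t <- s2) (c t * g.[y t]) * z t ^+ i = 0.
  move=> i hi.
  have : \sum_(t <- r) (c t * z t ^+ i) * g.[y t] = 0.
    apply: lin_eval => j hj; apply: H => //.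
    have sg : size g = (minn k (size r)).+1 by rewrite size_prod_XsubC size_take_min.
    rewrite sg /k in hj; lia.
  have z1 : \sum_(t <- s1) (c t * z t ^+ i) * g.[y t] = 0.
    apply: big1_seq => t /andP [_ ht]; apply/eqP; rewrite mulf_eq0; apply/orP; right.
    rewrite gv prodf_seq_eq0; apply/hasP; exists t => //=; by rewrite subrr eqxx.
  rewrite -{1}er big_cat z1 Monoid.mul1m => H0; apply: etrans H0.
  by apply: eq_big_seq => t _; rewrite mulrAC.
have s2size : size s2 = (size r - k)%N by rewrite size_drop.
case e2 : s2 => [|s s2'].
  move: s2size; rewrite e2 /= /k.
  have : (0 < size r)%N by case: (r) rn.
  lia.
have ur' : uniq (s1 ++ s :: s2') by rewrite -e2 er.
have sr : s \in r by rewrite -er mem_cat e2 mem_head orbT.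
set h := \prod_(u <- s2') ('X - (z u)%:P).
have : \sum_(t <- s2) (c t * g.[y t]) * h.[z t] = 0.
  apply: lin_eval => j hj; apply: H2.
  rewrite /h size_prod_XsubC in hj.
  move: s2size; rewrite e2 /= /k => s2size.
  lia.
rewrite e2 big_cons big1_seq ?addr0.
  apply/eqP; rewrite !mulf_neq0 ?cn //.
    rewrite gv prodf_seq_neq0; apply/allP => u hu /=; rewrite subr_eq0.
    apply/eqP => /iy; move: ur'; rewrite cat_uniq /= => /and3P [_ hh _].
    have ur2 : u \in r by rewrite -er mem_cat hu.
    move=> /(_ sr ur2) esu; move: hh; rewrite esu hu //.
  rewrite /h horner_prod prodf_seq_neq0; apply/allP => u hu /=.
  rewrite hornerXsubC subr_eq0; apply/eqP => /iz.
  have ur2 : u \in r by rewrite -er mem_cat e2 inE hu !orbT.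
  move=> /(_ sr ur2) esu; move: ur'; rewrite cat_uniq /= esu hu.
  by rewrite !andbF.
move=> t /andP [_ ht]; apply/eqP; rewrite mulf_eq0; apply/orP; right.
rewrite /h horner_prod prodf_seq_eq0; apply/hasP; exists t => //=.
by rewrite hornerXsubC subrr.
Qed.
Lemma x_eq1 (L : fieldType) (x : L) (na nb : nat) :
  (0 < na)%N -> coprime na nb -> x ^+ na = 1 -> x ^+ nb = 1 -> x = 1.
Proof.
move=> na0 co ha hb.
have [a _] := Bezoutl nb na0; rewrite (eqP co) => /dvdnP [q hq].
have : x ^+ (1 + a * nb) = 1 by rewrite hq mulnC exprM ha expr1n.
by rewrite exprD expr1 mulnC exprM hb expr1n mulr1.
Qed.

Arguments x_eq1 {L x na nb}.

Lemma pow_root1 (L : fieldType) (x : L) (n : nat) (m : int) :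
  x ^+ n = 1 -> (x ^ m) ^+ n = 1.
Proof.
move=> h; rewrite exprnP exprz_exp mulrC -exprz_exp -exprnP h.
by rewrite exp1rz.
Qed.

Arguments pow_root1 {L x n}.

Lemma root_inj (L : fieldType) (n : nat) (al : L) (m : int) :
  n.-primitive_root al -> coprime n `|m| -> forall k k' : nat,
  (k < n)%N -> (k' < n)%N -> (al ^ m) ^+ k = (al ^ m) ^+ k' -> k = k'.
Proof.
move=> pr co k k' hk hk' e.
have n0 : (0 < n)%N := prim_order_gt0 pr.
have al0 : al != 0.
  apply/negP => /eqP a0; have := prim_expr_order pr; rewrite a0.
  by case: n n0 {pr co hk hk' e} => // n _; rewrite expr0n /= => /eqP; rewrite eq_sym oner_eq0.
have [u [v huv]] := Bezoutz n m.
have g1 : gcdz n m = 1.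
  by rewrite /gcdz; move: co; rewrite /coprime => /eqP ->.
have ea : al = (al ^ m) ^ v.
  rewrite -{1}(expr1z al) -g1 -huv expfzDr //.
  rewrite [u * _]mulrC [v * _]mulrC -!exprz_exp -(exprnP al n) (prim_expr_order pr).
  by rewrite exp1rz mul1r.
have : al ^+ k == al ^+ k'.
  rewrite ea !exprnP !exprz_exp ![v * _]mulrC -!exprz_exp -!exprnP.
  by rewrite e.
by rewrite (eq_prim_root_expr pr) !modn_small // => /eqP.
Qed.

Arguments root_inj {L n al m}.

Lemma pair_inj (L : fieldType) (na nb : nat) (al be : L) (m1 m2 : int) :
  na.-primitive_root al -> nb.-primitive_root be -> coprime na nb ->
  coprime na `|m1| -> coprime nb `|m2| ->
  forall k k' l l' : nat, (k < na)%N -> (k' < na)%N -> (l < nb)%N -> (l' < nb)%N ->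
  (al ^ m1) ^+ k * (be ^ m2) ^+ l = (al ^ m1) ^+ k' * (be ^ m2) ^+ l' ->
  k = k' /\ l = l'.
Proof.
move=> pa pb co c1 c2 k k' l l' hk hk' hl hl' e.
have na0 : (0 < na)%N := prim_order_gt0 pa.
have nz : forall (x : L) (n : nat) (m : int) (j : nat), (0 < n)%N ->
    x ^+ n = 1 -> (x ^ m) ^+ j != 0.
  move=> x n m j n0 h; apply: expf_neq0; apply/negP => /eqP x0.
  move: (pow_root1 m h); rewrite x0.
  by case: n n0 {h} => // n _; rewrite expr0n /= => /eqP; rewrite eq_sym oner_eq0.
have ha := prim_expr_order pa; have hb := prim_expr_order pb.
have nb0 : (0 < nb)%N := prim_order_gt0 pb.
set x := (al ^ m1) ^+ k / (al ^ m1) ^+ k'.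
have xe : x = (be ^ m2) ^+ l' / (be ^ m2) ^+ l.
  apply: (canRL (mulfK (nz _ _ _ _ nb0 hb))).
  rewrite /x mulrAC e mulrAC divff ?mul1r //.
  exact: (nz _ _ _ _ na0 ha).
have x1 : x = 1.
  apply: (x_eq1 na0 co).
    by rewrite /x expr_div_n -!exprM ![(_ * na)%N]mulnC !exprM (pow_root1 m1 ha) !expr1n divr1.
  by rewrite xe expr_div_n -!exprM ![(_ * nb)%N]mulnC !exprM (pow_root1 m2 hb) !expr1n divr1.
have ek : (al ^ m1) ^+ k = (al ^ m1) ^+ k'.
  have hz := nz _ _ m1 k' na0 ha; by rewrite -[LHS](divfK hz) -/x x1 mul1r.
have := root_inj pa c1 _ _ hk hk' ek => kk; split => //.
move: e; rewrite kk => /mulfI e.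
by apply: (root_inj pb c2 _ _ hl hl'); apply: e; apply: (nz _ _ _ _ na0 ha).
Qed.
Definition supp (F : fieldType) (a : {poly F}) : seq nat :=
  [seq k <- iota 0 (size a) | a`_k != 0].

Arguments supp {F}.

Lemma size_supp (F : fieldType) (a : {poly F}) : size (supp a) = hweight a.
Proof.
rewrite /supp size_filter /hweight -[in RHS](mkseq_nth 0 a) /mkseq count_map.
by [].
Qed.

Lemma mem_supp (F : fieldType) (a : {poly F}) k :
  k \in supp a -> (k < size a)%N /\ a`_k != 0.
Proof. by rewrite mem_filter mem_iota add0n => /and3P [-> _ ->]. Qed.

Lemma peval_supp (F : fieldType) (L : fieldExtType F) (a : {poly F}) (x : L) :
  peval a x = \sum_(k <- supp a) (a`_k)%:A * x ^+ k.
Proof.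
rewrite /peval horner_coef size_map_poly /supp big_filter.
rewrite [RHS](big_rmcond _ (iota 0 (size a))).
  have -> : iota 0 (size a) = index_iota 0 (size a) by rewrite /index_iota subn0.
  rewrite big_mkord; apply: eq_bigr => i _; by rewrite coef_map.
by move=> i; rewrite negbK => /eqP ->; rewrite scale0r mul0r.
Qed.

Lemma exp_split (L : fieldType) (x : L) (f m : int) (i j k : nat) : x != 0 ->
  (x ^ (f + i%:Z * m + j%:Z)) ^+ k =
  (x ^ f) ^+ k * ((x ^ m) ^+ k) ^+ i * ((x ^ 1) ^+ k) ^+ j.
Proof.
move=> x0; rewrite !exprnP !exprz_exp -!expfzDr //; congr (_ ^ _).
ring.
Qed.

Lemma prim_neq0 (L : fieldType) (n : nat) (x : L) : n.-primitive_root x -> x != 0.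
Proof.
move=> pr; apply/negP => /eqP a0; have := prim_expr_order pr; rewrite a0.
have := prim_order_gt0 pr.
by case: n {pr} => // n _; rewrite expr0n /= => /eqP; rewrite eq_sym oner_eq0.
Qed.

Lemma hweight_gt0 (F : fieldType) (a : {poly F}) : a != 0 -> (0 < hweight a)%N.
Proof.
move=> a0; rewrite -size_supp.
have sa : (0 < size a)%N by rewrite size_poly_gt0.
have : (size a).-1 \in supp a.
  rewrite mem_filter mem_iota add0n /=; apply/andP; split.
    by rewrite -lead_coefE lead_coef_eq0.
  by rewrite prednK.
by case: (supp a).
Qed.

Arguments prim_neq0 {L n x}.
Arguments hweight_gt0 {F a}.
Arguments pair_inj {L na nb al be m1 m2}.
Arguments mem_supp {F a k}.

Lemma arith_fin (x y dd n : nat) : (1 < dd)%N -> (0 < y)%N ->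
  (dd.-1 + n < x * y)%N -> (dd + n + y.-1 < x.+1 * y)%N.
Proof. move=> *; nia. Qed.

Theorem theorem5
  (F : finFieldType) (L : fieldExtType F)
  (na nb da db : nat) (A B : pred {poly F})
  (alpha beta : L) (f1 f2 m1 m2 : int) (delta nu : nat) :
  cyclic_code na A -> min_distance A da ->
  cyclic_code nb B -> min_distance B db ->
  coprime na nb ->
  na.-primitive_root alpha -> nb.-primitive_root beta ->
  m1 != 0 -> m2 != 0 ->
  coprime na `|m1| -> coprime nb `|m2| ->
  (2 <= delta)%N -> (0 < nu)%N ->
  (forall a b, A a -> B b ->
     forall j : nat, (j <= nu)%N ->
     forall i : nat, (i < delta.-1)%N ->
       peval a (alpha ^ (f1 + i%:Z * m1 + j%:Z)) *
       peval b (beta ^ (f2 + i%:Z * m2 + j%:Z)) = 0) ->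
  (ceil_div (delta + nu) db <= da)%N.
Proof.
move=> [A0 Alin Asz _] [[p [q [Ap Aq pq hpq]]] _].
move=> [B0 Blin Bsz _] [[p' [q' [Bp Bq pq' hpq']]] _].
move=> co pa pb _ _ c1 c2 hd hnu H.
set a := p - q; set b := p' - q'.
have Aa : A a by have := Alin (-1) q p Aq Ap; rewrite scaleN1r addrC.
have Bb : B b by have := Blin (-1) q' p' Bq Bp; rewrite scaleN1r addrC.
have wa : hweight a = da by [].
have wb : hweight b = db by [].
have a0 : a != 0 by rewrite subr_eq0.
have b0 : b != 0 by rewrite subr_eq0.
have da0 : (0 < da)%N by rewrite -wa hweight_gt0.
have db0 : (0 < db)%N by rewrite -wb hweight_gt0.
have al0 := prim_neq0 pa; have be0 := prim_neq0 pb.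
set r := [seq (k, l) | k <- supp a, l <- supp b].
have sr : size r = (da * db)%N by rewrite size_allpairs !size_supp wa wb.
set c := fun t : nat * nat => (a`_t.1)%:A * (b`_t.2)%:A * (alpha ^ f1) ^+ t.1 * (beta ^ f2) ^+ t.2.
set z := fun t : nat * nat => (alpha ^ m1) ^+ t.1 * (beta ^ m2) ^+ t.2.
set y := fun t : nat * nat => (alpha ^ 1) ^+ t.1 * (beta ^ 1) ^+ t.2.
have memr : forall t, t \in r -> [/\ (t.1 < na)%N, (t.2 < nb)%N, a`_t.1 != 0 & b`_t.2 != 0].
  move=> t /allpairsP [[k l] [/= hk hl ->]] /=.
  have [hk1 hk2] := mem_supp hk; have [hl1 hl2] := mem_supp hl.
  split => //.
    by apply: leq_trans hk1 (Asz _ Aa).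
  by apply: leq_trans hl1 (Bsz _ Bb).
have key : (delta.-1 + nu < size r)%N.
  apply: (@core L _ r c y z).
  - rewrite allpairs_uniq ?filter_uniq ?iota_uniq //.
    by move=> [? ?] [? ?] _ _.
  - move=> [k l] [k' l'] /memr [/= h1 h2 _ _] /memr [/= h3 h4 _ _] /= e.
    have [-> ->] := @pair_inj _ _ _ _ _ 1 1 pa pb co (coprimen1 _) (coprimen1 _) _ _ _ _ h1 h3 h2 h4 e.
    by [].
  - move=> [k l] [k' l'] /memr [/= h1 h2 _ _] /memr [/= h3 h4 _ _] /= e.
    have [-> ->] := pair_inj pa pb co c1 c2 _ _ _ _ h1 h3 h2 h4 e.
    by [].
  - move=> [k l] /memr [/= _ _ h1 h2]; rewrite /c /=.
    rewrite !mulf_neq0 ?expf_neq0 ?expfz_neq0 //.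
      by rewrite scaler_eq0 negb_or h1 oner_neq0.
    by rewrite scaler_eq0 negb_or h2 oner_neq0.
  - by case: (delta) hd => [|[|dd]].
  - apply/eqP => r0; have := muln_gt0 da db; by rewrite da0 db0 -sr r0.
  move=> i j hi hj; apply: etrans (H a b Aa Bb j hj i hi); rewrite !peval_supp /r big_allpairs mulr_suml.
  apply: eq_bigr => k _; rewrite mulr_sumr; apply: eq_bigr => l _.
  rewrite /c /z /y /= !exp_split // !exprMn.
  move: ((a`_k)%:A) ((b`_l)%:A) ((alpha ^ f1) ^+ k) ((beta ^ f2) ^+ l)
    ((alpha ^ m1) ^+ k ^+ i) ((beta ^ m2) ^+ l ^+ i) ((alpha ^ 1) ^+ k ^+ j)
    ((beta ^ 1) ^+ l ^+ j) => x1 x2 x3 x4 x5 x6 x7 x8.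
  ring.
rewrite sr in key; rewrite /ceil_div -ltnS ltn_divLR //.
exact: arith_fin.
Qed.
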